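(* There is an absolute constant $C>0$ such that for every $n\in\mathbb{N}$, every nonempty $B\subseteq[n]$ and every $\varepsilon\in(0,1)$, there is a randomized nonadaptive algorithm which, given oracle access to $g:B\to\mathbb{R}$, makes at most $C\cdot\max\{1,\log_2(\varepsilon|B|)\}$ queries, accepts with probability $1$ whenever $g$ is convex, and rejects with probability at least $\varepsilon$ whenever $g$ is $\varepsilon$-far from convex.
   Context: For a finite set $B\subseteq\mathbb{R}$, $g:B\to\mathbb{R}$ is convex if $\frac{g(y)-g(x)}{y-x}\le\frac{g(z)-g(y)}{z-y}$ for all $x<y<z$ in $B$ (using the actual positions of the points). $g$ is $\varepsilon$-far from convex if every convex $h:B\to\mathbb{R}$ differs from $g$ on at least $\varepsilon|B|$ points of $B$. Nonadaptive means all query points are chosen (randomly) before any answer is seen. *)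

(* Defs.v *)
From HB Require Import structures.
From mathcomp Require Import all_boot all_order all_algebra.
From mathcomp Require Import reals exp Rstruct.
Set Implicit Arguments. Unset Strict Implicit. Unset Printing Implicit Defensive.
Import Order.TTheory GRing.Theory Num.Theory.
Local Open Scope ring_scope.

Notation R := Rdefinitions.R.

(* [n] = {1,...,n} is represented inside 'I_n.+1 = {0,...,n}; a subset B of [n]
   is a finset of 'I_n.+1 not containing 0. A function B -> R is represented by a
   total function 'I_n.+1 -> R of which only the values on B matter. *)
Definition subset_of_n (n : nat) (B : {set 'I_n.+1}) : Prop :=
  forall i : 'I_n.+1, i \in B -> (0 < i)%N.

Definition pos (n : nat) (i : 'I_n.+1) : R := (nat_of_ord i)%:R.

Definition convex_on (n : nat) (B : {set 'I_n.+1}) (g : 'I_n.+1 -> R) : Prop :=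
  forall x y z : 'I_n.+1, x \in B -> y \in B -> z \in B ->
    (x < y)%N -> (y < z)%N ->
    (g y - g x) / (pos y - pos x) <= (g z - g y) / (pos z - pos y).

Definition far_from_convex (n : nat) (B : {set 'I_n.+1}) (eps : R)
  (g : 'I_n.+1 -> R) : Prop :=
  forall h : 'I_n.+1 -> R, convex_on B h ->
    eps * (#|B|)%:R <= (#|[set x in B | g x != h x]|)%:R.

Definition log2 (x : R) : R := ln x / ln 2.

(* A randomized nonadaptive tester on B: a finite probability space Omega with
   weights p; for each random seed w, a list of query points Q w (all in B),
   chosen before any answer is seen, and a decision D w applied to the list of
   answers (true = accept). *)
Record nonadaptive_tester (n : nat) (B : {set 'I_n.+1}) := NATester {
  seed : finType;
  prob : seed -> R;
  queries : seed -> seq 'I_n.+1;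
  decide : seed -> seq R -> bool;
  prob_ge0 : forall w, 0 <= prob w;
  prob_sum1 : \sum_(w : seed) prob w = 1;
  queries_in_B : forall w, all (fun x => x \in B) (queries w)
}.

Definition accept_prob n B (T : @nonadaptive_tester n B) (g : 'I_n.+1 -> R) : R :=
  \sum_(w : seed T | decide w (map g (queries w))) prob w.

Definition reject_prob n B (T : @nonadaptive_tester n B) (g : 'I_n.+1 -> R) : R :=
  \sum_(w : seed T | ~~ decide w (map g (queries w))) prob w.

Definition query_bound n B (T : @nonadaptive_tester n B) (q : R) : Prop :=
  forall w : seed T, (size (queries w))%:R <= q.

(* Main.v *)
Require Import Defs.
From mathcomp Require Import all_boot all_order all_algebra.
From mathcomp Require Import reals exp Rstruct.
Import Order.TTheory GRing.Theory Num.Theory.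
Local Open Scope ring_scope.
From HB Require Import structures.
From mathcomp Require Import ring lra zify.
Set Implicit Arguments. Unset Strict Implicit. Unset Printing Implicit Defensive.


Definition sl (f P : nat -> R) (i j : nat) : R := (f j - f i) / (P j - P i).

Lemma med (f P : nat -> R) a b c : P a < P b -> P b < P c ->
  sl f P a b <= sl f P b c -> sl f P a b <= sl f P a c /\ sl f P a c <= sl f P b c.
Proof.
move=> hab hbc huv.
have da0 : 0 < P b - P a by rewrite subr_gt0.
have db0 : 0 < P c - P b by rewrite subr_gt0.
have dc0 : 0 < P c - P a by rewrite subr_gt0; apply: lt_trans hbc.
move: huv; rewrite /sl.
set u := (f b - f a) / (P b - P a).
set v := (f c - f b) / (P c - P b).
have eu : f b - f a = u * (P b - P a) by rewrite /u divfK // gt_eqF.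
have ev : f c - f b = v * (P c - P b) by rewrite /v divfK // gt_eqF.
have ew : f c - f a = u * (P b - P a) + v * (P c - P b) by rewrite -eu -ev; ring.
move=> huv; rewrite ew; split.
  rewrite ler_pdivlMr //.
  have : u * (P c - P b) <= v * (P c - P b) by rewrite ler_pM2r.
  move=> h; have -> : P c - P a = (P b - P a) + (P c - P b) by ring.
  lra.
rewrite ler_pdivrMr //.
have : u * (P b - P a) <= v * (P b - P a) by rewrite ler_pM2r.
move=> h; have -> : P c - P a = (P b - P a) + (P c - P b) by ring.
lra.
Qed.

Lemma med2 (f P : nat -> R) a b c : P a < P b -> P b < P c ->
  sl f P b c <= sl f P a b -> sl f P b c <= sl f P a c /\ sl f P a c <= sl f P a b.
Proof.
move=> hab hbc huv.
have := @med (fun i => - f i) P a b c hab hbc.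
have E : forall i j, sl (fun i => - f i) P i j = - sl f P i j.
  by move=> i j; rewrite /sl -mulNr; congr (_ / _); ring.
rewrite !E !lerN2 => /(_ huv) [h1 h2]; split => //.
Qed.


Definition incr (P : nat -> R) (m : nat) :=
  forall i j, (i < j)%N -> (j < m)%N -> P i < P j.

Definition cvx (f P : nat -> R) (S : nat -> bool) :=
  forall a b c, S a -> S b -> S c -> (a < b)%N -> (b < c)%N ->
    sl f P a b <= sl f P b c.

Lemma tri f P m S a b c : incr P m -> cvx f P S -> S a -> S b -> S c ->
  (a < b)%N -> (b < c)%N -> (c < m)%N ->
  sl f P a b <= sl f P a c /\ sl f P a c <= sl f P b c.
Proof.
move=> Hi Hc Sa Sb Sc ab bc cm.
apply: med; [apply: Hi => //; lia | apply: Hi => // | exact: Hc].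
Qed.

Definition PC (f P : nat -> R) x y :=
  sl f P x x.+1 <= sl f P x y /\ sl f P x y <= sl f P y.-1 y.

Lemma block_PC f P m Sx Sy x y p : incr P m -> cvx f P Sx -> cvx f P Sy ->
  (x < y)%N -> (y < m)%N -> (x <= p)%N -> (p.+1 <= y)%N ->
  Sx x -> Sx x.+1 -> Sx p -> Sx p.+1 ->
  Sy p -> Sy p.+1 -> Sy y.-1 -> Sy y -> PC f P x y.
Proof.
move=> Hi Cx Cy xy ym xp py Sxx Sxx1 Sxp Sxq Syp Syq Syy1 Syy.
have A : sl f P x p.+1 <= sl f P p p.+1.
  case: (ltnP x p) => h; last by have -> : x = p by lia.
  by have [] := tri Hi Cx Sxx Sxp Sxq h (ltnSn p) (leq_ltn_trans py ym).
have A' : sl f P x x.+1 <= sl f P x p.+1.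
  case: (ltnP x.+1 p.+1) => h; last by have -> : p.+1 = x.+1 by lia.
  by have [] := tri Hi Cx Sxx Sxx1 Sxq (ltnSn x) h (leq_ltn_trans py ym).
case: (ltnP p.+1 y) => hq; last first.
  have ey : y = p.+1 by lia.
  by rewrite /PC ey /=; split => //.
have B : sl f P p p.+1 <= sl f P p.+1 y by apply: Cy.
have B' : sl f P p.+1 y <= sl f P y.-1 y.
  case: (ltnP p.+1 y.-1) => h; last by have -> : y.-1 = p.+1 by lia.
  have [] := tri Hi Cy Syq Syy1 Syy h _ ym => //; lia.
have [M1 M2] := @med f P _ _ _ (Hi x p.+1 ltac:(lia) ltac:(lia)) (Hi p.+1 y hq ym)
  (le_trans A B).
split; lra.
Qed.

Lemma chain_PC f P m x y z : incr P m ->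
  (x < y)%N -> (y < z)%N -> (z < m)%N ->
  PC f P x y -> PC f P y z -> sl f P y.-1 y <= sl f P y y.+1 -> PC f P x z.
Proof.
move=> Hi xy yz zm [h1 h2] [h3 h4] h5.
have [M1 M2] := @med f P _ _ _ (Hi x y xy ltac:(lia)) (Hi y z yz zm)
  (le_trans h2 (le_trans h5 h3)).
split; lra.
Qed.

Local Close Scope ring_scope.


Fixpoint tpath (fuel lo hi i : nat) : seq nat :=
  match fuel with
  | 0 => [::]
  | fuel'.+1 =>
    if hi <= lo.+2 then [::] else
    let mid := lo + (hi - lo) %/ 2 in
    mid.-1 :: mid :: (if i < mid then tpath fuel' lo mid i else tpath fuel' mid hi i)
  end.

Lemma tpath_lca fuel lo hi x y : hi - lo <= fuel -> lo <= x -> x < y -> y < hi ->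
  y = x.+1 \/ exists p, [/\ x <= p, p.+1 <= y,
     (p \in tpath fuel lo hi x) && (p.+1 \in tpath fuel lo hi x) &
     (p \in tpath fuel lo hi y) && (p.+1 \in tpath fuel lo hi y)].
Proof.
elim: fuel lo hi => [|fuel IH] lo hi hf lx xy yh /=; first lia.
case: ifP => hs; first by left; lia.
have e2 := divn_eq (hi - lo) 2; have r2 : (hi - lo) %% 2 < 2 by rewrite ltn_pmod.
set mid := lo + (hi - lo) %/ 2.
have emid : mid = lo + (hi - lo) %/ 2 by []. clearbody mid.
case: (ltnP x mid) => xm; case: (ltnP y mid) => ym.
- have [h|[p [h1 h2 h3 h4]]] := IH lo mid ltac:(lia) lx xy ym; first by left.
  right; exists p; split => //.
    by move: h3; rewrite !inE => /andP[-> ->]; rewrite !orbT.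
  by move: h4; rewrite !inE => /andP[-> ->]; rewrite !orbT.
- have e1 : mid.-1.+1 = mid by lia.
  right; exists mid.-1; rewrite e1 !inE !eqxx !orbT; split => //; lia.
- lia.
- have [h|[p [h1 h2 h3 h4]]] := IH mid hi ltac:(lia) xm xy yh; first by left.
  right; exists p; split => //.
    by move: h3; rewrite !inE => /andP[-> ->]; rewrite !orbT.
  by move: h4; rewrite !inE => /andP[-> ->]; rewrite !orbT.
Qed.

Lemma tpath_size fuel lo hi i t : hi - lo <= 2 ^ t -> size (tpath fuel lo hi i) <= 2 * t.
Proof.
elim: fuel lo hi t => [|fuel IH] lo hi t ht //=.
case: ifP => hs //.
have e2 := divn_eq (hi - lo) 2; have r2 : (hi - lo) %% 2 < 2 by rewrite ltn_pmod.
case: t ht => [|t] ht; first by rewrite expn0 in ht; lia.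
rewrite expnS in ht.
have h1 : (hi - lo) %/ 2 <= 2 ^ t by lia.
case: ifP => _ /=.
  by have := IH lo (lo + (hi - lo) %/ 2) t ltac:(lia); lia.
by have := IH (lo + (hi - lo) %/ 2) hi t ltac:(lia); lia.
Qed.

Definition blo (s c i : nat) := (i + c) %/ s * s - c.
Definition bhi (m s c i : nat) := minn m ((i + c) %/ s * s + s - c).

Lemma blo_le s c i : blo s c i <= i.
Proof. rewrite /blo; have := leq_trunc_div (i + c) s; lia. Qed.

Lemma bhi_gt m s c i : 0 < s -> i < m -> i < bhi m s c i.
Proof.
move=> s0 im; rewrite /bhi; have := ltn_ceil (i + c) s0; rewrite mulSn; lia.
Qed.

Lemma bsize m s c i : bhi m s c i - blo s c i <= s.
Proof. rewrite /bhi /blo; lia. Qed.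

Lemma div_between q s a : 0 < s -> q * s <= a -> a < q * s + s -> a %/ s = q.
Proof.
move=> s0 h1 h2.
have : a %/ s < q.+1 by rewrite ltn_divLR // mulSn; lia.
have : q <= a %/ s by rewrite leq_divRL.
lia.
Qed.

Lemma gap_block h u v : 0 < h -> u < v -> v - u <= h ->
  u %/ (h + h) = v %/ (h + h) \/ (u + h) %/ (h + h) = (v + h) %/ (h + h).
Proof.
move=> h0 uv vu; set s := h + h.
have s0 : 0 < s by rewrite /s; lia.
case: (eqVneq (u %/ s) (v %/ s)) => e; first by left.
right; set q := v %/ s.
have le : u %/ s <= q by rewrite leq_div2r // ltnW.
have lt : u %/ s < q by rewrite ltn_neqAle e.
have uq : u < q * s by rewrite -ltn_divLR.
have qv : q * s <= v by apply: leq_trunc_div.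
rewrite (@div_between q s (u + h)) // ?(@div_between q s (v + h)) //; rewrite /s in uq qv *; lia.
Qed.

Local Open Scope ring_scope.


Definition el n (B : {set 'I_n.+1}) (i : nat) : 'I_n.+1 := nth ord0 (enum B) i.

Definition rawQ (m hN i : nat) : seq nat :=
  [:: i.-1; i; i.+1] ++ tpath (hN + hN) (blo (hN + hN) 0 i) (bhi m (hN + hN) 0 i) i
    ++ tpath (hN + hN) (blo (hN + hN) hN i) (bhi m (hN + hN) hN i) i.

Definition Qidx n (B : {set 'I_n.+1}) hN i : seq nat :=
  [seq j <- rawQ #|B| hN i | (j < #|B|)%N].

Definition qs n (B : {set 'I_n.+1}) hN i : seq 'I_n.+1 := map (el B) (Qidx B hN i).

Definition dec n (B : {set 'I_n.+1}) hN i (vs : seq R) : bool :=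
  let q := qs B hN i in
  [forall a : 'I_(size q), forall b : 'I_(size q), forall c : 'I_(size q),
    ((nth ord0 q a < nth ord0 q b) && (nth ord0 q b < nth ord0 q c))%N ==>
    ((nth 0 vs b - nth 0 vs a) / (pos (nth ord0 q b) - pos (nth ord0 q a)) <=
     (nth 0 vs c - nth 0 vs b) / (pos (nth ord0 q c) - pos (nth ord0 q b)))].

Lemma size_enumB n (B : {set 'I_n.+1}) : size (enum B) = #|B|.
Proof. by rewrite cardE. Qed.

Lemma el_in n (B : {set 'I_n.+1}) i : (i < #|B|)%N -> el B i \in B.
Proof. by move=> h; rewrite /el -mem_enum mem_nth // size_enumB. Qed.

Lemma sorted_enumB n (B : {set 'I_n.+1}) : sorted (relpre val ltn) (enum B).
Proof.
rewrite /enum_mem -enumT; apply: sorted_filter.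
  by move=> x y z /= ; apply: ltn_trans.
by rewrite -sorted_map val_enum_ord iota_ltn_sorted.
Qed.

Lemma el_mono n (B : {set 'I_n.+1}) i j : (i < j)%N -> (j < #|B|)%N ->
  (val (el B i) < val (el B j))%N.
Proof.
move=> ij jm.
have tr : transitive (relpre (@nat_of_ord n.+1) ltn).
  by move=> x y z /=; apply: ltn_trans.
have := @sorted_ltn_nth _ (relpre val ltn) tr ord0 _ (sorted_enumB B) i j.
rewrite !inE size_enumB; apply => //.
by apply: ltn_trans jm.
Qed.

Lemma el_surj n (B : {set 'I_n.+1}) x : x \in B -> exists2 i, (i < #|B|)%N & el B i = x.
Proof.
move=> xB; exists (index x (enum B)); first by rewrite -size_enumB index_mem mem_enum.
by rewrite /el nth_index // mem_enum.
Qed.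

Definition fP n (B : {set 'I_n.+1}) (j : nat) : R := pos (el B j).

Lemma incr_el n (B : {set 'I_n.+1}) : incr (fP B) #|B|.
Proof. by move=> i j ij jm; rewrite /fP /pos ltr_nat; apply: el_mono. Qed.

Lemma Qidx_lt n (B : {set 'I_n.+1}) hN i j : j \in Qidx B hN i -> (j < #|B|)%N.
Proof. by rewrite mem_filter => /andP[]. Qed.

Lemma Qidx_raw n (B : {set 'I_n.+1}) hN i j : (j < #|B|)%N -> j \in rawQ #|B| hN i ->
  j \in Qidx B hN i.
Proof. by move=> h1 h2; rewrite mem_filter h1. Qed.

Lemma queries_inB n (B : {set 'I_n.+1}) hN i : all (fun x => x \in B) (qs B hN i).
Proof.
apply/allP => x /mapP [j /Qidx_lt jm ->]; exact: el_in.
Qed.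

Lemma dec_cvx n (B : {set 'I_n.+1}) hN i (g : 'I_n.+1 -> R) :
  dec B hN i (map g (qs B hN i)) ->
  cvx (fun j => g (el B j)) (fP B) (fun j => j \in Qidx B hN i).
Proof.
move=> /forallP H a b c Sa Sb Sc ab bc.
set Q := Qidx B hN i.
have sz : size (qs B hN i) = size Q by rewrite size_map.
have ia : (index a Q < size (qs B hN i))%N by rewrite sz index_mem.
have ib : (index b Q < size (qs B hN i))%N by rewrite sz index_mem.
have ic : (index c Q < size (qs B hN i))%N by rewrite sz index_mem.
have nq : forall k, k \in Q -> nth ord0 (qs B hN i) (index k Q) = el B k.
  move=> k kQ; rewrite /qs (nth_map 0); last by rewrite index_mem.
  by rewrite nth_index.
have nv : forall k, k \in Q -> nth 0 (map g (qs B hN i)) (index k Q) = g (el B k).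
  move=> k kQ; rewrite (nth_map ord0); first by rewrite nq.
  by rewrite sz index_mem.
have := H (Ordinal ia) => /forallP /(_ (Ordinal ib)) /forallP /(_ (Ordinal ic)) /implyP.
rewrite /= !nq // !nv //.
have cm := Qidx_lt Sc.
rewrite !el_mono //; last by apply: ltn_trans cm.
by move=> /(_ isT).
Qed.

Lemma convex_dec n (B : {set 'I_n.+1}) hN i (g : 'I_n.+1 -> R) :
  convex_on B g -> dec B hN i (map g (qs B hN i)).
Proof.
move=> Hc; apply/forallP => a; apply/forallP => b; apply/forallP => c; apply/implyP.
move=> /andP[ab bc].
have inB : forall k : 'I_(size (qs B hN i)), nth ord0 (qs B hN i) k \in B.
  by move=> k; have /allP := queries_inB B hN i; apply; apply: mem_nth.
rewrite !(nth_map ord0) //.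
by apply: Hc.
Qed.


Definition good n (B : {set 'I_n.+1}) hN (g : 'I_n.+1 -> R) (i : nat) :=
  dec B hN i (map g (qs B hN i)).

Lemma Q_self n (B : {set 'I_n.+1}) hN i : (i < #|B|)%N -> i \in Qidx B hN i.
Proof. by move=> h; apply: Qidx_raw => //; rewrite !inE eqxx !orbT. Qed.
Lemma Q_pred n (B : {set 'I_n.+1}) hN i : (i < #|B|)%N -> i.-1 \in Qidx B hN i.
Proof. by move=> h; apply: Qidx_raw; [lia| rewrite !inE eqxx]. Qed.
Lemma Q_succ n (B : {set 'I_n.+1}) hN i : (i.+1 < #|B|)%N -> i.+1 \in Qidx B hN i.
Proof. by move=> h; apply: Qidx_raw => //; rewrite !inE eqxx !orbT. Qed.
Lemma Q_tpath n (B : {set 'I_n.+1}) hN c i p : (c = 0 \/ c = hN)%N -> (p < #|B|)%N ->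
  p \in tpath (hN + hN) (blo (hN + hN) c i) (bhi #|B| (hN + hN) c i) i ->
  p \in Qidx B hN i.
Proof.
move=> [->|->] h1 h2; apply: Qidx_raw => //; rewrite /rawQ !mem_cat h2 ?orbT //.
Qed.

Lemma LC_good n (B : {set 'I_n.+1}) hN g i : good B hN g i -> (0 < i)%N -> (i.+1 < #|B|)%N ->
  sl (fun j => g (el B j)) (fP B) i.-1 i <= sl (fun j => g (el B j)) (fP B) i i.+1.
Proof.
move=> /dec_cvx C i0 im; apply: C; first exact: Q_pred (ltnW im).
- exact: Q_self (ltnW im).
- exact: Q_succ.
- lia.
- lia.
Qed.

Lemma consec_PC n (B : {set 'I_n.+1}) hN g u v : (0 < hN)%N ->
  good B hN g u -> good B hN g v -> (u < v)%N -> (v < #|B|)%N -> (v - u <= hN)%N ->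
  PC (fun j => g (el B j)) (fP B) u v.
Proof.
move=> h0 gu gv uv vm vu.
have um : (u < #|B|)%N by apply: ltn_trans vm.
set s := hN + hN.
have s0 : (0 < s)%N by rewrite /s; lia.
have key : forall c, (c = 0 \/ c = hN)%N -> ((u + c) %/ s = (v + c) %/ s)%N ->
    PC (fun j => g (el B j)) (fP B) u v.
  move=> c hc e.
  have elo : blo s c v = blo s c u by rewrite /blo e.
  have ehi : bhi #|B| s c v = bhi #|B| s c u by rewrite /bhi e.
  have hv : (v < bhi #|B| s c u)%N by rewrite -ehi; apply: bhi_gt.
  have [ey|[p [h1 h2 /andP[h3 h4] /andP[h5 h6]]]] :=
    tpath_lca (bsize #|B| s c u) (blo_le s c u) uv hv.
  - have := (@block_PC _ _ #|B| _ _ u v u (@incr_el n B) (dec_cvx gu) (dec_cvx gv)).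
    move=> H; apply: H => //.
    + exact: Q_self.
    + by apply: Q_succ; rewrite -ey.
    + exact: Q_self.
    + by apply: Q_succ; rewrite -ey.
    + by rewrite ey; apply: (@Q_pred n B hN u.+1); rewrite -ey.
    + by rewrite -ey; apply: Q_self.
    + by apply: Q_pred.
    + exact: Q_self.
  - have pm : (p.+1 < #|B|)%N by apply: leq_ltn_trans vm.
    apply: (@block_PC _ _ #|B| _ _ u v p (@incr_el n B) (dec_cvx gu) (dec_cvx gv)) => //.
    + exact: Q_self.
    + by apply: Q_succ; apply: leq_ltn_trans vm; lia.
    + by apply: (Q_tpath hc) => //; apply: ltn_trans pm.
    + by apply: (Q_tpath hc).
    + by apply: (Q_tpath hc) => //; [apply: ltn_trans pm| rewrite elo ehi].
    + by apply: (Q_tpath hc) => //; rewrite elo ehi.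
    + by apply: Q_pred.
    + exact: Q_self.
have [e|e] := gap_block h0 uv vu.
  by apply: (key 0%N); [left | rewrite !addn0].
by apply: (key hN); [right|].
Qed.

Lemma PC_all n (B : {set 'I_n.+1}) hN g : (0 < hN)%N ->
  (forall x v, (x < v)%N -> (v < #|B|)%N -> good B hN g x -> good B hN g v ->
     (forall j, (x < j)%N -> (j < v)%N -> ~~ good B hN g j) -> (v - x <= hN)%N) ->
  forall x y, (x < y)%N -> (y < #|B|)%N -> good B hN g x -> good B hN g y ->
  PC (fun j => g (el B j)) (fP B) x y.
Proof.
move=> h0 Hgap.
suff : forall d x y, (y - x <= d)%N -> (x < y)%N -> (y < #|B|)%N ->
    good B hN g x -> good B hN g y -> PC (fun j => g (el B j)) (fP B) x y.
  by move=> H x y xy ym gx gy; exact: (H (y - x)%N x y (leqnn _) xy ym gx gy).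
elim=> [|d IH] x y yd xy ym gx gy; first lia.
have ex : exists j, (x < j)%N && good B hN g j by exists y; rewrite xy gy.
case: (ex_minnP ex) => v /andP[xv gv] vmin.
have vy : (v <= y)%N by apply: vmin; rewrite xy gy.
have vm : (v < #|B|)%N by apply: leq_ltn_trans ym.
have cons : PC (fun j => g (el B j)) (fP B) x v.
  apply: (@consec_PC n B hN g x v h0 gx gv xv vm); apply: Hgap => // j xj jv; apply/negP => gj.
  by have := vmin j; rewrite xj gj => /(_ isT); lia.
case: (ltnP v y) => vy'; last by have -> : y = v by lia.
apply: (@chain_PC _ _ #|B| x v y (@incr_el n B)) => //.
  by apply: IH => //; lia.
by apply: (LC_good gv); lia.
Qed.


Definition sig_ (f P : nat -> R) (m j : nat) : R :=
  if (j.+1 < m)%N then sl f P j j.+1 else if (0 < j)%N then sl f P j.-1 j else 0.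

Definition Lw (f P : nat -> R) m j (t : R) : R := f j + sig_ f P m j * (t - P j).

Lemma slK (f P : nat -> R) i j : P i < P j -> f j - f i = sl f P i j * (P j - P i).
Proof. by move=> h; rewrite /sl divfK // gt_eqF // subr_gt0. Qed.

Lemma supp_line f P m (G : nat -> bool) w w' : incr P m ->
  (forall x y, (x < y)%N -> (y < m)%N -> G x -> G y -> PC f P x y) ->
  (forall i, G i -> (0 < i)%N -> (i.+1 < m)%N -> sl f P i.-1 i <= sl f P i i.+1) ->
  G w -> G w' -> (w < m)%N -> (w' < m)%N -> Lw f P m w (P w') <= f w'.
Proof.
move=> Hi Hpc Hlc gw gw' wm w'm; rewrite /Lw.
case: (ltngtP w w') => c; last by rewrite c subrr mulr0 addr0.
- have [h1 _] := Hpc _ _ c w'm gw gw'.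
  have e := slK f (Hi _ _ c w'm).
  rewrite /sig_ ifT; last by apply: leq_ltn_trans w'm.
  have : 0 < P w' - P w by rewrite subr_gt0; apply: Hi.
  move=> d; have := ler_pM2r d; move=> /(_ (sl f P w w.+1) (sl f P w w')).
  rewrite h1 => /esym hh. lra.
- have [_ h2] := Hpc _ _ c wm gw' gw.
  have e := slK f (Hi _ _ c wm).
  have hs : sl f P w' w <= sig_ f P m w.
    rewrite /sig_; case: ifP => h; first by apply: le_trans h2 (Hlc _ gw _ h); lia.
    by rewrite ifT //; lia.
  have d : 0 < P w - P w' by rewrite subr_gt0; apply: Hi.
  have := ler_pM2r d; move=> /(_ (sl f P w' w) (sig_ f P m w)).
  rewrite hs => /esym hh.
  have -> : P w' - P w = - (P w - P w') by ring.
  lra.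
Qed.

Lemma pos_mono n (x y : 'I_n.+1) : (x < y)%N -> pos x < pos y.
Proof. by move=> h; rewrite /pos ltr_nat. Qed.

Definition ext n (B : {set 'I_n.+1}) (f P : nat -> R) (G : nat -> bool) (w0 : 'I_#|B|)
  (x : 'I_n.+1) : R :=
  let w := Order.arg_max w0 (fun w : 'I_#|B| => G w) (fun w : 'I_#|B| => Lw f P #|B| w (pos x)) in
  Lw f P #|B| w (pos x).

Lemma ext_ge n (B : {set 'I_n.+1}) (f P : nat -> R) (G : nat -> bool) (w0 : 'I_#|B|) (x : 'I_n.+1) (w : 'I_#|B|) :
  G w0 -> G w -> Lw f P #|B| w (pos x) <= ext f P G w0 x.
Proof.
move=> g0 gw; rewrite /ext.
by case: (@arg_maxP _ _ _ w0 (fun w : 'I_#|B| => G w)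
  (fun w : 'I_#|B| => Lw f P #|B| w (pos x)) g0) => i _ /(_ w gw).
Qed.

Lemma ext_eq n (B : {set 'I_n.+1}) (f P : nat -> R) (G : nat -> bool) (w0 : 'I_#|B|) (x : 'I_n.+1) :
  G w0 -> exists2 w : 'I_#|B|, G w & ext f P G w0 x = Lw f P #|B| w (pos x).
Proof.
move=> g0; rewrite /ext.
case: (@arg_maxP _ _ _ w0 (fun w : 'I_#|B| => G w)
  (fun w : 'I_#|B| => Lw f P #|B| w (pos x)) g0) => i gi _.
by exists i.
Qed.

Lemma ext_convex n (B : {set 'I_n.+1}) (f P : nat -> R) (G : nat -> bool) (w0 : 'I_#|B|) :
  G w0 -> convex_on B (ext f P G w0).
Proof.
move=> g0 x y z _ _ _ xy yz.
have [w gw ey] := @ext_eq n B f P G w0 y g0.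
have hx := @ext_ge n B f P G w0 x w g0 gw.
have hz := @ext_ge n B f P G w0 z w g0 gw.
move: hx hz; rewrite ey /Lw; set sg := sig_ f P #|B| w => hx hz.
have dxy : 0 < pos y - pos x by rewrite subr_gt0 pos_mono.
have dyz : 0 < pos z - pos y by rewrite subr_gt0 pos_mono.
apply: (@le_trans _ _ sg).
  rewrite ler_pdivrMr //; lra.
rewrite ler_pdivlMr //; lra.
Qed.


Lemma count_gap m (G : nat -> bool) x v : (v < m)%N ->
  (forall j, (x < j)%N -> (j < v)%N -> ~~ G j) ->
  (v - x.+1 <= #|[set w : 'I_m | ~~ G w]|)%N.
Proof.
move=> vm H.
have lt : forall j : 'I_(v - x.+1), (x.+1 + j < m)%N.
  by move=> j; have := ltn_ord j; lia.
pose phi := fun j : 'I_(v - x.+1) => Ordinal (lt j).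
have inj : injective phi by move=> a b /(congr1 val) /= e; apply: val_inj => /=; lia.
rewrite -{1}(card_ord (v - x.+1)) -(card_imset (mem 'I_(v - x.+1)) inj).
apply: subset_leq_card; apply/subsetP => y /imsetP [j _ ->].
rewrite inE /=; apply: H; have := ltn_ord j; lia.
Qed.

Lemma sound_ext n (B : {set 'I_n.+1}) hN (g : 'I_n.+1 -> R) : (0 < hN)%N ->
  (#|[set w : 'I_#|B| | ~~ good B hN g w]| < hN)%N ->
  exists h, convex_on B h /\
    (#|[set x in B | g x != h x]| <= #|[set w : 'I_#|B| | ~~ good B hN g w]|)%N.
Proof.
move=> h0 hb.
set bad := [set w : 'I_#|B| | ~~ good B hN g w].
have Hpc := @PC_all n B hN g h0.
have Hpc' : forall x y, (x < y)%N -> (y < #|B|)%N -> good B hN g x -> good B hN g y ->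
    PC (fun j => g (el B j)) (fP B) x y.
  apply: Hpc => x v xv vm _ _ H.
  have := count_gap vm H; move: hb; rewrite -/bad; lia.
case: (pickP (fun w : 'I_#|B| => good B hN g w)) => [w0 g0 | none].
  exists (ext (fun j => g (el B j)) (fP B) (good B hN g) w0); split.
    exact: ext_convex.
  apply: leq_trans (leq_imset_card (fun w : 'I_#|B| => el B w) bad).
  apply: subset_leq_card; apply/subsetP => x; rewrite inE => /andP[xB ne].
  have [i im ex] := el_surj xB.
  apply/imsetP; exists (Ordinal im) => //; rewrite inE /=.
  apply/negP => gi; move/negP: ne; apply; apply/eqP.
  have le1 := @ext_ge n B (fun j => g (el B j)) (fP B) (good B hN g) w0 x (Ordinal im) g0 gi.
  have [w gw e] := @ext_eq n B (fun j => g (el B j)) (fP B) (good B hN g) w0 x g0.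
  have le2 : Lw (fun j => g (el B j)) (fP B) #|B| w (pos x) <= g x.
    rewrite -ex.
    have := @supp_line (fun j => g (el B j)) (fP B) #|B| (good B hN g) (val w) i (@incr_el n B) Hpc'.
    apply => //; last exact: ltn_ord.
    by move=> j gj j0 jm; apply: (LC_good gj).
  have E1 : Lw (fun j => g (el B j)) (fP B) #|B| (Ordinal im) (pos x) = g x.
    by rewrite /Lw /fP /= ex subrr mulr0 addr0.
  rewrite E1 in le1; rewrite -e in le2.
  by apply/le_anti/andP.
exists (fun _ => 0); split.
  by move=> x y z _ _ _ _ _; rewrite !subrr !mul0r.
have -> : bad = setT by apply/setP => w; rewrite !inE none.
rewrite cardsT card_ord.
apply: leq_trans (subset_leq_card _) _; last by [].
by apply/subsetP => x; rewrite inE => /andP[].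
Qed.


Lemma prob_sum1_lem n (B : {set 'I_n.+1}) : (0 < #|B|)%N ->
  \sum_(w : 'I_#|B|) (#|B|%:R : R)^-1 = 1.
Proof.
move=> h; rewrite sumr_const card_ord -[X in X = _](mulr_natr (#|B|%:R^-1)) mulVf //.
by rewrite pnatr_eq0 -lt0n.
Qed.

Definition mkT n (B : {set 'I_n.+1}) hN (HB : (0 < #|B|)%N) : nonadaptive_tester B :=
  @NATester n B 'I_#|B| (fun _ => (#|B|%:R : R)^-1) (fun w => qs B hN w)
    (fun w vs => dec B hN w vs)
    (fun _ => ltac:(by rewrite invr_ge0 ler0n)) (prob_sum1_lem HB) (fun w => queries_inB B hN w).

Lemma qs_size n (B : {set 'I_n.+1}) hN w :
  (size (qs B hN w) <= 7 + 4 * trunc_log 2 (hN + hN))%N.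
Proof.
set j := trunc_log 2 (hN + hN).
have hj : (hN + hN < 2 ^ j.+1)%N by apply: trunc_log_ltn.
rewrite /qs size_map /Qidx size_filter; apply: leq_trans (count_size _ _) _.
rewrite /rawQ !size_cat /=.
have s1 := @tpath_size (hN + hN) (blo (hN + hN) 0 w) (bhi #|B| (hN + hN) 0 w) w j.+1
  (leq_trans (bsize _ _ _ _) (ltnW hj)).
have s2 := @tpath_size (hN + hN) (blo (hN + hN) hN w) (bhi #|B| (hN + hN) hN w) w j.+1
  (leq_trans (bsize _ _ _ _) (ltnW hj)).
apply: leq_trans (leq_add (leqnn 3) (leq_add s1 s2)) _; lia.
Qed.

Lemma reject_eq n (B : {set 'I_n.+1}) hN (HB : (0 < #|B|)%N) g :
  reject_prob (mkT hN HB) g =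
  (#|[set w : 'I_#|B| | ~~ good B hN g w]|)%:R / (#|B|%:R).
Proof.
rewrite /reject_prob /=.
rewrite (eq_bigl (fun w => w \in [set w : 'I_#|B| | ~~ good B hN g w])); last first.
  by move=> w; rewrite inE.
rewrite sumr_const; set k := #|_|; set c := (_^-1). by rewrite -[c *+ k]mulr_natl mulrC.
Qed.

Lemma accept_eq n (B : {set 'I_n.+1}) hN (HB : (0 < #|B|)%N) g :
  convex_on B g -> accept_prob (mkT hN HB) g = 1.
Proof.
move=> Hc; rewrite /accept_prob /=.
rewrite (eq_bigl xpredT); first exact: prob_sum1_lem.
by move=> w; rewrite /= convex_dec.
Qed.

Lemma qbound (eps : R) (m N : nat) : 0 < eps -> N = (Num.truncn (eps * m%:R)).+1 ->
  ((7 + 4 * trunc_log 2 (N + N))%N)%:R <= 20 * Num.max 1 (log2 (eps * m%:R)).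
Proof.
move=> e0 eN.
set k := eps * m%:R.
have k0 : 0 <= k by rewrite mulr_ge0 // ltW.
set j := trunc_log 2 (N + N).
have hj : (2 ^ j <= N + N)%N by apply: trunc_logP => //; rewrite eN; lia.
have hN : N%:R <= k + 1 by rewrite eN -addn1 natrD lerD2r truncn_le.
set M := Num.max 1 k.
have M1 : 1 <= M by rewrite le_max lexx.
have kM : k <= M by rewrite le_max lexx orbT.
have M0 : 0 < M by apply: lt_le_trans M1.
have h2j : (2 ^ j)%:R <= 4 * M.
  apply: le_trans (_ : (N + N)%:R <= _); first by rewrite ler_nat.
  rewrite natrD; lra.
have l2 : 0 < ln (2 : R) by apply: ln_gt0; lra.
have hlj : j%:R * ln (2 : R) <= ln (2 : R) *+ 2 + ln M.
  have e1 : ln ((2 ^ j)%:R : R) = j%:R * ln 2 by rewrite natrX lnXn // mulr_natl.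
  have e2 : ln (4 * M) = ln (2 : R) *+ 2 + ln M.
    have e4 : (4 : R) = 2 ^+ 2 by rewrite expr2; lra.
    rewrite e4 lnM ?posrE ?exprn_gt0 // lnXn //.
  rewrite -e1 -e2 ler_ln ?posrE //.
    by rewrite ltr0n expn_gt0.
  lra.
set L := Num.max 1 (log2 k).
have L1 : 1 <= L by rewrite le_max lexx.
have hML : ln M / ln 2 <= L.
  case: (lerP k 1) => hk.
    rewrite /M max_l // ln1 mul0r; lra.
  rewrite /M max_r; last exact: ltW.
  by rewrite /L le_max lexx orbT.
have hjL : j%:R <= 2 + L.
  apply: le_trans (_ : (ln (2:R) *+ 2 + ln M) / ln 2 <= _).
    by rewrite ler_pdivlMr.
  rewrite mulrDl mulrnAl divff ?gt_eqF //.
  lra.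
rewrite natrD natrM; lra.
Qed.

Theorem mainTheorem7 :
  exists C : R, 0 < C /\
  forall (n : nat) (B : {set 'I_n.+1}) (eps : R),
    subset_of_n B -> B != set0 -> 0 < eps -> eps < 1 ->
    exists T : nonadaptive_tester B,
      query_bound T (C * Num.max 1 (log2 (eps * (#|B|)%:R))) /\
      (forall g : 'I_n.+1 -> R, convex_on B g -> accept_prob T g = 1) /\
      (forall g : 'I_n.+1 -> R, far_from_convex B eps g -> eps <= reject_prob T g).
Proof.
exists 20; split; first by rewrite ltr0n.
move=> n B eps _ HB e0 e1.
have HB0 : (0 < #|B|)%N by rewrite card_gt0.
set N := (Num.truncn (eps * #|B|%:R)).+1.
exists (mkT N HB0); split; [|split].
- move=> w /=.
  apply: le_trans (@qbound eps #|B| N e0 (erefl N)).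
  by rewrite ler_nat qs_size.
- by move=> g; apply: accept_eq.
- move=> g Hf; rewrite reject_eq ler_pdivlMr ?ltr0n //.
  case: (ltnP #|[set w : 'I_#|B| | ~~ good B N g w]| N) => h.
    have [hh [hc hd]] := sound_ext (ltn0Sn _) h.
    by apply: le_trans (Hf hh hc) _; rewrite ler_nat.
  apply: le_trans (_ : N%:R <= _); last by rewrite ler_nat.
  exact: ltW (truncnS_gt _).
Qed.
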